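(* Let $n,k\ge 1$, $\lambda_2\ge 0$, let $A_1,A_2\in\mathbb{R}^{k\times k}$ be symmetric, $B_1,B_2\in\mathbb{R}^{n\times k}$, and let $W_P,W_Q\in\mathbb{R}^{n\times n}$ be symmetric with nonnegative entries, $D_P,D_Q$ the diagonal matrices with $(D_P)_{ii}=\sum_j (W_P)_{ij}$, $(D_Q)_{ii}=\sum_j (W_Q)_{ij}$, and $L_P=D_P-W_P$, $L_Q=D_Q-W_Q$. For $V=[v_{ij}]\in\mathbb{R}^{n\times k}$ define $$F(V)=\mathrm{Tr}\big(-2V^TB_1^+ + 2V^TB_1^- + VA_1^+V^T - VA_1^-V^T - 2V^TB_2^+ + 2V^TB_2^- + VA_2^+V^T - VA_2^-V^T + \lambda_2 V^TD_PV - \lambda_2 V^TW_PV + \lambda_2 V^TD_QV - \lambda_2 V^TW_QV\big),$$ and consider the problem $\min_V F(V)$ subject to $v_{ij}\ge 0$. Define the update $V\mapsto \mathcal{T}(V)$ by $$\mathcal{T}(V)_{ij}= v_{ij}\sqrt{\frac{\big(B_1^{+}+B_2^{+}+V(A_1^{-}+A_2^{-})+\lambda_2(W_P+W_Q)V\big)_{ij}}{\big(B_1^{-}+B_2^{-}+V(A_1^{+}+A_2^{+})+\lambda_2(D_P+D_Q)V\big)_{ij}}}.$$ Let $V^{(0)}$ have strictly positive entries and $V^{(t+1)}=\mathcal{T}(V^{(t)})$, and assume that at every iterate all numerator and denominator entries above are strictly positive. Then $F(V^{(t+1)})\le F(V^{(t)})$ for all $t\ge 0$, i.e. $F$ is monotonically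 non-increasing along the iteration. Moreover, if $V^{(t)}\to V^*$ and the denominator entries at $V^*$ are strictly positive, then $V^*$ satisfies the KKT complementary slackness condition $$\big(-2B_1-2B_2+2V^*(A_1+A_2)+2\lambda_2(L_P+L_Q)V^*\big)_{ij}\, v^*_{ij}=0\quad\text{for all } i,j.$$
   Context: For a real matrix $M$, $M^+$ and $M^-$ denote the entrywise parts $M^+_{ij}=(|M_{ij}|+M_{ij})/2$ and $M^-_{ij}=(|M_{ij}|-M_{ij})/2$, so $M=M^+-M^-$ with $M^+,M^-\ge 0$ entrywise. In the paper's application, $A_1=\mathrm{vec}(\mathbf U^{(P)})^T\mathrm{vec}(\mathbf U^{(P)})$, $A_2=\mathrm{vec}(\mathbf U^{(Q)})^T\mathrm{vec}(\mathbf U^{(Q)})$, $B_1=\mathrm{vec}(\mathbf X^{(P)})^T\mathrm{vec}(\mathbf U^{(P)})$, $B_2=\mathrm{vec}(\mathbf X^{(Q)})^T\mathrm{vec}(\mathbf U^{(Q)})$, where for a collection of matrices $\mathbf M=\{M_1,\dots,M_m\}$, $\mathrm{vec}(\mathbf M)$ is the matrix whose $i$-th column is the vectorization of $M_i$; $F(V)$ then equals, up to an additive constant independent of $V$, the TS-NMF objective as a function of $V$. *)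

(* Defs.v *)
From HB Require Import structures.
From mathcomp Require Import all_boot all_order all_algebra.
From mathcomp Require Import all_classical all_reals all_analysis.
Set Implicit Arguments. Unset Strict Implicit. Unset Printing Implicit Defensive.
Import Order.TTheory GRing.Theory Num.Theory.
Local Open Scope ring_scope.

Section Defs.
Variable R : realType.

Definition mpos m n (M : 'M[R]_(m, n)) : 'M[R]_(m, n) :=
  map_mx (fun x => (`|x| + x) / 2) M.
Definition mneg m n (M : 'M[R]_(m, n)) : 'M[R]_(m, n) :=
  map_mx (fun x => (`|x| - x) / 2) M.

Definition degmx n (W : 'M[R]_n) : 'M[R]_n := diag_mx (\row_i \sum_j W i j).

Definition laplacian n (W : 'M[R]_n) : 'M[R]_n := degmx W - W.

(* The objective F(V); the trace of the (formal) sum is the sum of the traces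
   of the individual k x k and n x n terms. *)
Definition Fobj n k (lam2 : R) (A1 A2 : 'M[R]_k) (B1 B2 : 'M[R]_(n, k))
    (WP WQ : 'M[R]_n) (V : 'M[R]_(n, k)) : R :=
    \tr (- 2%:R *: (V^T *m mpos B1)) + \tr (2%:R *: (V^T *m mneg B1))
  + \tr (V *m mpos A1 *m V^T) - \tr (V *m mneg A1 *m V^T)
  + \tr (- 2%:R *: (V^T *m mpos B2)) + \tr (2%:R *: (V^T *m mneg B2))
  + \tr (V *m mpos A2 *m V^T) - \tr (V *m mneg A2 *m V^T)
  + \tr (lam2 *: (V^T *m degmx WP *m V)) - \tr (lam2 *: (V^T *m WP *m V))
  + \tr (lam2 *: (V^T *m degmx WQ *m V)) - \tr (lam2 *: (V^T *m WQ *m V)).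

Definition numer n k (lam2 : R) (A1 A2 : 'M[R]_k) (B1 B2 : 'M[R]_(n, k))
    (WP WQ : 'M[R]_n) (V : 'M[R]_(n, k)) : 'M[R]_(n, k) :=
  mpos B1 + mpos B2 + V *m (mneg A1 + mneg A2) + lam2 *: ((WP + WQ) *m V).

Definition denom n k (lam2 : R) (A1 A2 : 'M[R]_k) (B1 B2 : 'M[R]_(n, k))
    (WP WQ : 'M[R]_n) (V : 'M[R]_(n, k)) : 'M[R]_(n, k) :=
  mneg B1 + mneg B2 + V *m (mpos A1 + mpos A2)
  + lam2 *: ((degmx WP + degmx WQ) *m V).

Definition Tupd n k (lam2 : R) (A1 A2 : 'M[R]_k) (B1 B2 : 'M[R]_(n, k))
    (WP WQ : 'M[R]_n) (V : 'M[R]_(n, k)) : 'M[R]_(n, k) :=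
  \matrix_(i, j) (V i j * Num.sqrt (numer lam2 A1 A2 B1 B2 WP WQ V i j
                                    / denom lam2 A1 A2 B1 B2 WP WQ V i j)).

Definition kktgrad n k (lam2 : R) (A1 A2 : 'M[R]_k) (B1 B2 : 'M[R]_(n, k))
    (WP WQ : 'M[R]_n) (V : 'M[R]_(n, k)) : 'M[R]_(n, k) :=
  - 2%:R *: B1 - 2%:R *: B2 + 2%:R *: (V *m (A1 + A2))
  + (2%:R * lam2) *: ((laplacian WP + laplacian WQ) *m V).

End Defs.

(* Main.v *)
Require Import Defs.
From HB Require Import structures.
From mathcomp Require Import all_boot all_order all_algebra.
From mathcomp Require Import all_classical all_reals all_analysis.
From mathcomp Require Import ring lra.
Import Order.TTheory GRing.Theory Num.Theory.
Import numFieldNormedType.Exports.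
Local Open Scope classical_set_scope.
Local Open Scope ring_scope.
Set Implicit Arguments. Unset Strict Implicit. Unset Printing Implicit Defensive.

Definition had (R : realType) m p (U X : 'M[R]_(m, p)) : 'M[R]_(m, p) :=
  \matrix_(i, j) (U i j * X i j).
Definition Lf (R : realType) m p (U M : 'M[R]_(m, p)) : R :=
  \sum_i \sum_j U i j * M i j.
Definition Pf (R : realType) m p (U X M : 'M[R]_(m, p)) : R :=
  \sum_i \sum_j M i j * U i j * (X i j ^+ 2 - 1).
Definition Nf (R : realType) m p (U X M : 'M[R]_(m, p)) : R :=
  \sum_i \sum_j M i j * U i j * (1 - (X i j ^+ 2)^-1).

Lemma trL (R : realType) m p (U M : 'M[R]_(m, p)) : \tr (U^T *m M) = Lf U M.
Proof.
rewrite /mxtrace /Lf exchange_big /=; apply: eq_bigr => j _.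
rewrite mxE; apply: eq_bigr => i _; by rewrite mxE.
Qed.

Lemma trQ0 (R : realType) m p (U : 'M[R]_(m, p)) (A : 'M[R]_p) :
  \tr (U *m A *m U^T) = Lf U (U *m A).
Proof.
rewrite /mxtrace /Lf; apply: eq_bigr => i _.
rewrite mxE; apply: eq_bigr => j _; rewrite [U^T _ _]mxE; exact: mulrC.
Qed.

Lemma LfT (R : realType) m p (U M : 'M[R]_(m, p)) : Lf U^T M^T = Lf U M.
Proof. rewrite /Lf exchange_big; apply: eq_bigr => i _; apply: eq_bigr => j _; by rewrite !mxE. Qed.
Lemma PfT (R : realType) m p (U X M : 'M[R]_(m, p)) : Pf U^T X^T M^T = Pf U X M.
Proof. rewrite /Pf exchange_big; apply: eq_bigr => i _; apply: eq_bigr => j _; by rewrite !mxE. Qed.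
Lemma NfT (R : realType) m p (U X M : 'M[R]_(m, p)) : Nf U^T X^T M^T = Nf U X M.
Proof. rewrite /Nf exchange_big; apply: eq_bigr => i _; apply: eq_bigr => j _; by rewrite !mxE. Qed.
Lemma hadT (R : realType) m p (U X : 'M[R]_(m, p)) : (had U X)^T = had U^T X^T.
Proof. by apply/matrixP => i j; rewrite !mxE. Qed.

Lemma PfD (R : realType) m p (U X M N : 'M[R]_(m, p)) : Pf U X (M + N) = Pf U X M + Pf U X N.
Proof. rewrite /Pf -big_split; apply: eq_bigr => i _; rewrite -big_split; apply: eq_bigr => j _; rewrite mxE; rewrite /=; ring. Qed.
Lemma NfD (R : realType) m p (U X M N : 'M[R]_(m, p)) : Nf U X (M + N) = Nf U X M + Nf U X N.
Proof. rewrite /Nf -big_split; apply: eq_bigr => i _; rewrite -big_split; apply: eq_bigr => j _; rewrite mxE; rewrite /=; ring. Qed.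
Lemma PfZ (R : realType) m p (U X M : 'M[R]_(m, p)) a : Pf U X (a *: M) = a * Pf U X M.
Proof. rewrite /Pf mulr_sumr; apply: eq_bigr => i _; rewrite mulr_sumr; apply: eq_bigr => j _; rewrite mxE; ring. Qed.
Lemma NfZ (R : realType) m p (U X M : 'M[R]_(m, p)) a : Nf U X (a *: M) = a * Nf U X M.
Proof. rewrite /Nf mulr_sumr; apply: eq_bigr => i _; rewrite mulr_sumr; apply: eq_bigr => j _; rewrite mxE; ring. Qed.
Lemma sumsym (R : realType) m p (U0 X : 'M[R]_(m, p)) (A : 'M[R]_p) (f : R -> R) :
  A^T = A ->
  \sum_i \sum_j \sum_l (U0 i l * A l j * U0 i j) * f (X i l) =
  \sum_i \sum_j \sum_l (U0 i l * A l j * U0 i j) * f (X i j).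
Proof.
move=> HA; apply: eq_bigr => i _; rewrite exchange_big /=.
apply: eq_bigr => j _; apply: eq_bigr => l _.
have -> : A l j = A j l by rewrite -{1}HA mxE.
by rewrite /=; ring.
Qed.

Lemma LhadE (R : realType) m p (U0 X : 'M[R]_(m, p)) (A : 'M[R]_p) :
  Lf (had U0 X) (had U0 X *m A) =
  \sum_i \sum_j \sum_l (U0 i l * A l j * U0 i j) * (X i l * X i j).
Proof.
rewrite /Lf; apply: eq_bigr => i _; apply: eq_bigr => j _.
rewrite !mxE mulr_sumr; apply: eq_bigr => l _; rewrite !mxE /=; ring.
Qed.

Lemma L0E (R : realType) m p (U0 : 'M[R]_(m, p)) (A : 'M[R]_p) :
  Lf U0 (U0 *m A) =
  \sum_i \sum_j \sum_l (U0 i l * A l j * U0 i j).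
Proof.
rewrite /Lf; apply: eq_bigr => i _; apply: eq_bigr => j _.
rewrite !mxE mulr_sumr; apply: eq_bigr => l _; rewrite /=; ring.
Qed.

Lemma PfE (R : realType) m p (U0 X : 'M[R]_(m, p)) (A : 'M[R]_p) :
  Pf U0 X (U0 *m A) =
  \sum_i \sum_j \sum_l (U0 i l * A l j * U0 i j) * (X i j ^+ 2 - 1).
Proof.
rewrite /Pf; apply: eq_bigr => i _; apply: eq_bigr => j _.
rewrite !mxE !mulr_suml; apply: eq_bigr => l _; rewrite /=; ring.
Qed.

Lemma NfE (R : realType) m p (U0 X : 'M[R]_(m, p)) (A : 'M[R]_p) :
  Nf U0 X (U0 *m A) =
  \sum_i \sum_j \sum_l (U0 i l * A l j * U0 i j) * (1 - (X i j ^+ 2)^-1).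
Proof.
rewrite /Nf; apply: eq_bigr => i _; apply: eq_bigr => j _.
rewrite !mxE !mulr_suml; apply: eq_bigr => l _; rewrite /=; ring.
Qed.

Lemma sum3_le (R : realType) m p (F G : 'I_m -> 'I_p -> 'I_p -> R) :
  (forall i j l, F i j l <= G i j l) ->
  \sum_i \sum_j \sum_l F i j l <= \sum_i \sum_j \sum_l G i j l.
Proof.
move=> H; apply: ler_sum => i _; apply: ler_sum => j _; apply: ler_sum => l _; exact: H.
Qed.

Lemma sum3_split (R : realType) m p (F G : 'I_m -> 'I_p -> 'I_p -> R) :
  \sum_i \sum_j \sum_l (F i j l + G i j l) =
  \sum_i \sum_j \sum_l F i j l + \sum_i \sum_j \sum_l G i j l.
Proof.
rewrite -big_split; apply: eq_bigr => i _; rewrite -big_split; apply: eq_bigr => j _.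
by rewrite -big_split.
Qed.

Lemma sum3_scale (R : realType) m p (F : 'I_m -> 'I_p -> 'I_p -> R) a :
  \sum_i \sum_j \sum_l (a * F i j l) = a * \sum_i \sum_j \sum_l F i j l.
Proof.
rewrite mulr_sumr; apply: eq_bigr => i _; rewrite mulr_sumr; apply: eq_bigr => j _.
by rewrite mulr_sumr.
Qed.

Lemma Qup (R : realType) m p (U0 X : 'M[R]_(m, p)) (A : 'M[R]_p) :
  A^T = A -> (forall i j, 0 <= A i j) -> (forall i j, 0 <= U0 i j) ->
  Lf (had U0 X) (had U0 X *m A) <= Lf U0 (U0 *m A) + Pf U0 X (U0 *m A).
Proof.
move=> HA A0 U00.
rewrite LhadE L0E PfE -sum3_split.
have S := sumsym U0 X (fun x => x ^+ 2) HA.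
set c := fun i j l => U0 i l * A l j * U0 i j.
have c0 : forall i j l, 0 <= c i j l.
  by move=> i j l; rewrite /c; apply: mulr_ge0; [apply: mulr_ge0|].
have H : \sum_i \sum_j \sum_l 2 * (c i j l * (X i l * X i j)) <=
         \sum_i \sum_j \sum_l c i j l * X i l ^+ 2 + \sum_i \sum_j \sum_l c i j l * X i j ^+ 2.
  rewrite -sum3_split; apply: sum3_le => i j l.
  have := c0 i j l; have := sqr_ge0 (X i l - X i j); set a := c i j l => h1 h2.
  have : 0 <= a * (X i l - X i j) ^+ 2 by apply: mulr_ge0.
  move=> h3. nra.
rewrite sum3_scale S in H.
have -> : \sum_i \sum_j \sum_l (c i j l + c i j l * (X i j ^+ 2 - 1)) =
          \sum_i \sum_j \sum_l c i j l * X i j ^+ 2.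
  by apply: eq_bigr => i _; apply: eq_bigr => j _; apply: eq_bigr => l _; ring.
lra.
Qed.
Lemma key2 (R : realType) (x y : R) : 0 < x -> 0 < y ->
  4 - (x ^+ 2)^-1 - (y ^+ 2)^-1 <= 2 * (x * y).
Proof.
move=> x0 y0.
set a := x^-1; set b := y^-1.
have a0 : 0 < a by rewrite invr_gt0.
have b0 : 0 < b by rewrite invr_gt0.
have ha : a * x = 1 by rewrite mulVf // gt_eqF.
have hb : b * y = 1 by rewrite mulVf // gt_eqF.
have -> : (x ^+ 2)^-1 = a ^+ 2 by rewrite exprVn.
have -> : (y ^+ 2)^-1 = b ^+ 2 by rewrite exprVn.
set c := x * y.
have c0 : 0 < c by rewrite mulr_gt0.
have hc : (a * b) * c = 1 by rewrite /c -mulrA [b * _]mulrCA hb mulr1 ha.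
have h1 : 2 * (a * b) <= a ^+ 2 + b ^+ 2.
  have := sqr_ge0 (a - b); lra.
have h2 : 2 <= (a * b) + c.
  have ab0 : 0 < a * b by rewrite mulr_gt0.
  have := sqr_ge0 (a * b - 1). 
  move=> hs. 
  have : 0 <= c * (a * b - 1) ^+ 2 by apply: mulr_ge0 => //; exact: ltW.
  move=> hh. nra.
lra.
Qed.

Lemma Qdown (R : realType) m p (U0 X : 'M[R]_(m, p)) (A : 'M[R]_p) :
  A^T = A -> (forall i j, 0 <= A i j) -> (forall i j, 0 <= U0 i j) ->
  (forall i j, 0 < X i j) ->
  Lf U0 (U0 *m A) + Nf U0 X (U0 *m A) <= Lf (had U0 X) (had U0 X *m A).
Proof.
move=> HA A0 U00 X0.
rewrite LhadE L0E NfE.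
have S := sumsym U0 X (fun x => 1 - (x ^+ 2)^-1) HA.
set c := fun i j l => U0 i l * A l j * U0 i j.
have c0 : forall i j l, 0 <= c i j l.
  by move=> i j l; rewrite /c; apply: mulr_ge0; [apply: mulr_ge0|].
have H : \sum_i \sum_j \sum_l (2 * c i j l + c i j l * (1 - (X i l ^+ 2)^-1))
         + \sum_i \sum_j \sum_l c i j l * (1 - (X i j ^+ 2)^-1) <=
         \sum_i \sum_j \sum_l 2 * (c i j l * (X i l * X i j)).
  rewrite -sum3_split; apply: sum3_le => i j l.
  have := key2 (X0 i l) (X0 i j); have := c0 i j l; set a := c i j l => h1 h2.
  have : a * (4 - (X i l ^+ 2)^-1 - (X i j ^+ 2)^-1) <= a * (2 * (X i l * X i j)).
    exact: ler_wpM2l.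
  move=> h3; lra.
rewrite sum3_scale sum3_split sum3_scale S in H.
lra.
Qed.

Lemma Lin1 (R : realType) m p (U0 X M : 'M[R]_(m, p)) :
  (forall i j, 0 <= M i j) -> (forall i j, 0 <= U0 i j) -> (forall i j, 0 < X i j) ->
  - 2 * Lf (had U0 X) M + 2 * Lf U0 M <= - Nf U0 X M.
Proof.
move=> M0 U00 X0.
suff : Nf U0 X M <= 2 * Lf (had U0 X) M - 2 * Lf U0 M by lra.
rewrite /Nf /Lf !mulr_sumr -sumrB; apply: ler_sum => i _.
rewrite !mulr_sumr -sumrB; apply: ler_sum => j _.
rewrite mxE.
have := X0 i j; move: (X i j) => x x0.
have h : 1 - (x ^+ 2)^-1 <= 2 * x - 2.
  set a := x^-1.
  have a0 : 0 < a by rewrite invr_gt0.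
  have ha : a * x = 1 by rewrite mulVf // gt_eqF.
  rewrite -exprVn -/a.
  (* 2x - 3 + a^2 >= 0 *)
  have : 0 <= a ^+ 2 * (x - 1) ^+ 2 * (2 * x + 1).
    apply: mulr_ge0; [apply: mulr_ge0; [exact: sqr_ge0| exact: sqr_ge0]| lra].
  have -> : a ^+ 2 * (x - 1) ^+ 2 * (2 * x + 1) =
     2 * x * (a * x) ^+ 2 - 3 * (a * x) ^+ 2 + a ^+ 2 by ring.
  rewrite ha; lra.
have := mulr_ge0 (M0 i j) (U00 i j); set q := M i j * U0 i j => q0.
have : q * (1 - (x ^+ 2)^-1) <= q * (2 * x - 2) by exact: ler_wpM2l.
rewrite /q => hh. rewrite /=. nra.
Qed.

Lemma Lin2 (R : realType) m p (U0 X M : 'M[R]_(m, p)) :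
  (forall i j, 0 <= M i j) -> (forall i j, 0 <= U0 i j) ->
  2 * Lf (had U0 X) M - 2 * Lf U0 M <= Pf U0 X M.
Proof.
move=> M0 U00.
rewrite /Pf /Lf !mulr_sumr -sumrB; apply: ler_sum => i _.
rewrite !mulr_sumr -sumrB; apply: ler_sum => j _.
rewrite mxE.
move: (X i j) => x.
have := mulr_ge0 (M0 i j) (U00 i j); set q := M i j * U0 i j => q0.
have : 0 <= q * (x - 1) ^+ 2 by apply: mulr_ge0 => //; exact: sqr_ge0.
rewrite /q => hh. nra.
Qed.
Lemma QupT (R : realType) m p (U0 X : 'M[R]_(m, p)) (P : 'M[R]_m) :
  P^T = P -> (forall i j, 0 <= P i j) -> (forall i j, 0 <= U0 i j) ->
  Lf (had U0 X) (P *m had U0 X) <= Lf U0 (P *m U0) + Pf U0 X (P *m U0).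
Proof.
move=> HP P0 U00.
have E : forall U : 'M[R]_(m, p), U^T *m P = (P *m U)^T by move=> U; rewrite trmx_mul HP.
have := Qup (U0:=U0^T) (X^T) HP P0 (fun i j => ltac:(by rewrite mxE; apply: U00)).
by rewrite -hadT !E !LfT PfT.
Qed.

Lemma QdownT (R : realType) m p (U0 X : 'M[R]_(m, p)) (P : 'M[R]_m) :
  P^T = P -> (forall i j, 0 <= P i j) -> (forall i j, 0 <= U0 i j) ->
  (forall i j, 0 < X i j) ->
  Lf U0 (P *m U0) + Nf U0 X (P *m U0) <= Lf (had U0 X) (P *m had U0 X).
Proof.
move=> HP P0 U00 X0.
have E : forall U : 'M[R]_(m, p), U^T *m P = (P *m U)^T by move=> U; rewrite trmx_mul HP.
have := Qdown (U0:=U0^T) (X:=X^T) HP P0 (fun i j => ltac:(by rewrite mxE; apply: U00)) (fun i j => ltac:(by rewrite mxE; apply: X0)).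
by rewrite -hadT !E !LfT NfT.
Qed.

Lemma trQT (R : realType) m p (V : 'M[R]_(m, p)) (P : 'M[R]_m) :
  \tr (V^T *m P *m V) = Lf V (P *m V).
Proof. by rewrite -mulmxA trL. Qed.

Lemma mpos_ge0 (R : realType) m p (M : 'M[R]_(m, p)) i j : 0 <= mpos M i j.
Proof.
rewrite mxE; have h := ler_norm (M i j); have h' := ler_norm (- M i j).
rewrite normrN in h'; lra.
Qed.

Lemma mneg_ge0 (R : realType) m p (M : 'M[R]_(m, p)) i j : 0 <= mneg M i j.
Proof.
rewrite mxE; have h := ler_norm (M i j); have h' := ler_norm (- M i j).
rewrite normrN in h'; lra.
Qed.

Lemma mpos_sym (R : realType) p (M : 'M[R]_p) : M^T = M -> (mpos M)^T = mpos M.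
Proof. move=> H; apply/matrixP => i j; rewrite !mxE; have e : M j i = M i j by rewrite -{1}H mxE.
by rewrite e. Qed.

Lemma mneg_sym (R : realType) p (M : 'M[R]_p) : M^T = M -> (mneg M)^T = mneg M.
Proof. move=> H; apply/matrixP => i j; rewrite !mxE; have e : M j i = M i j by rewrite -{1}H mxE.
by rewrite e. Qed.

Lemma degmx_sym (R : realType) p (W : 'M[R]_p) : (degmx W)^T = degmx W.
Proof. exact: tr_diag_mx. Qed.

Lemma degmx_ge0 (R : realType) p (W : 'M[R]_p) :
  (forall i j, 0 <= W i j) -> forall i j, 0 <= degmx W i j.
Proof.
move=> W0 i j; rewrite /degmx mxE mxE; apply: mulrn_wge0; apply: sumr_ge0 => l _; exact: W0.
Qed.

Lemma step (R : realType) (n k : nat) (lam2 : R)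
    (A1 A2 : 'M[R]_k) (B1 B2 : 'M[R]_(n, k)) (WP WQ : 'M[R]_n) (V : 'M[R]_(n, k)) :
  0 <= lam2 ->
  A1^T = A1 -> A2^T = A2 -> WP^T = WP -> WQ^T = WQ ->
  (forall i j, 0 <= WP i j) -> (forall i j, 0 <= WQ i j) ->
  (forall i j, 0 < V i j) ->
  (forall i j, 0 < numer lam2 A1 A2 B1 B2 WP WQ V i j) ->
  (forall i j, 0 < denom lam2 A1 A2 B1 B2 WP WQ V i j) ->
  Fobj lam2 A1 A2 B1 B2 WP WQ (Tupd lam2 A1 A2 B1 B2 WP WQ V)
    <= Fobj lam2 A1 A2 B1 B2 WP WQ V.
Proof.
move=> l0 hA1 hA2 hWP hWQ WP0 WQ0 V0 nu0 de0.
set nu := numer lam2 A1 A2 B1 B2 WP WQ V in nu0 *.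
set de := denom lam2 A1 A2 B1 B2 WP WQ V in de0 *.
pose X := \matrix_(i, j) Num.sqrt (nu i j / de i j).
have TV : Tupd lam2 A1 A2 B1 B2 WP WQ V = had V X by apply/matrixP => i j; rewrite !mxE.
have X0 : forall i j, 0 < X i j by move=> i j; rewrite mxE sqrtr_gt0 divr_gt0.
have V0' : forall i j, 0 <= V i j by move=> i j; exact: ltW.
have key : Pf V X de = Nf V X nu.
  rewrite /Pf /Nf; apply: eq_bigr => i _; apply: eq_bigr => j _.
  rewrite [X i j]mxE sqr_sqrtr; last by apply: ltW; rewrite divr_gt0.
  have := nu0 i j; have := de0 i j; move: (nu i j) (de i j) => a b b0 a0.
  field. by rewrite !gt_eqF.
have Pde : Pf V X de = Pf V X (mneg B1) + Pf V X (mneg B2) + Pf V X (V *m mpos A1)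
   + Pf V X (V *m mpos A2) + lam2 * (Pf V X (degmx WP *m V) + Pf V X (degmx WQ *m V)).
  by rewrite /de /denom mulmxDr mulmxDl !PfD !PfZ !PfD !addrA.
have Nnu : Nf V X nu = Nf V X (mpos B1) + Nf V X (mpos B2) + Nf V X (V *m mneg A1)
   + Nf V X (V *m mneg A2) + lam2 * (Nf V X (WP *m V) + Nf V X (WQ *m V)).
  by rewrite /nu /numer mulmxDr mulmxDl !NfD !NfZ !NfD !addrA.
rewrite TV /Fobj !mxtraceZ !trQT !trL !trQ0.
have b1 := Lin1 (mpos_ge0 B1) V0' X0.
have b2 := Lin2 X (mneg_ge0 B1) V0'.
have b3 := Lin1 (mpos_ge0 B2) V0' X0.
have b4 := Lin2 X (mneg_ge0 B2) V0'.
have a1 := Qup X (mpos_sym hA1) (mpos_ge0 A1) V0'.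
have a2 := Qup X (mpos_sym hA2) (mpos_ge0 A2) V0'.
have a3 := Qdown (mneg_sym hA1) (mneg_ge0 A1) V0' X0.
have a4 := Qdown (mneg_sym hA2) (mneg_ge0 A2) V0' X0.
have w1 := QupT X (degmx_sym WP) (degmx_ge0 WP0) V0'.
have w2 := QupT X (degmx_sym WQ) (degmx_ge0 WQ0) V0'.
have w3 := QdownT hWP WP0 V0' X0.
have w4 := QdownT hWQ WQ0 V0' X0.
have w1' := ler_wpM2l l0 w1.
have w2' := ler_wpM2l l0 w2.
have w3' := ler_wpM2l l0 w3.
have w4' := ler_wpM2l l0 w4.
move: w1' w2' w3' w4'; rewrite !mulrDr => w1' w2' w3' w4'.
rewrite mulrDr in Pde; rewrite mulrDr in Nnu.
lra.
Qed.
Lemma cvg_bigsum (R : realType) (I : Type) (s : seq I) (f : I -> nat -> R) (a : I -> R) :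
  (forall i, f i t @[t --> \oo] --> a i) ->
  (\sum_(i <- s) f i t) @[t --> \oo] --> \sum_(i <- s) a i.
Proof.
move=> H; elim: s => [|x s IH].
  have -> : (fun t => \sum_(i <- [::]) f i t) = (fun=> 0) by apply: funext => t; rewrite big_nil.
  rewrite big_nil; exact: cvg_cst.
have -> : (fun t => \sum_(i <- x :: s) f i t) = (fun t => f x t + \sum_(i <- s) f i t).
  by apply: funext => t; rewrite big_cons.
rewrite big_cons; exact: cvgD.
Qed.

Lemma cvg_mulmxr (R : realType) m p q (Vt : nat -> 'M[R]_(m, p)) (V : 'M[R]_(m, p))
   (C : 'M[R]_(p, q)) i j :
  (forall i j, Vt t i j @[t --> \oo] --> V i j) ->
  (Vt t *m C) i j @[t --> \oo] --> (V *m C) i j.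
Proof.
move=> H.
have -> : (fun t => (Vt t *m C) i j) = (fun t => \sum_l Vt t i l * C l j).
  by apply: funext => t; rewrite mxE.
rewrite mxE; apply: cvg_bigsum => l; apply: cvgMr_tmp; exact: H.
Qed.

Lemma cvg_mulmxl (R : realType) m p q (Vt : nat -> 'M[R]_(p, q)) (V : 'M[R]_(p, q))
   (C : 'M[R]_(m, p)) i j :
  (forall i j, Vt t i j @[t --> \oo] --> V i j) ->
  (C *m Vt t) i j @[t --> \oo] --> (C *m V) i j.
Proof.
move=> H.
have -> : (fun t => (C *m Vt t) i j) = (fun t => \sum_l C i l * Vt t l j).
  by apply: funext => t; rewrite mxE.
rewrite mxE; apply: cvg_bigsum => l; apply: cvgMl_tmp; exact: H.
Qed.

Lemma addE (R : realType) m p (M N : 'M[R]_(m, p)) i j : (M + N) i j = M i j + N i j.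
Proof. by rewrite mxE. Qed.
Lemma subE (R : realType) m p (M N : 'M[R]_(m, p)) i j : (M - N) i j = M i j - N i j.
Proof. by rewrite !mxE. Qed.
Lemma scaleE (R : realType) m p (M : 'M[R]_(m, p)) a i j : (a *: M) i j = a * M i j.
Proof. by rewrite mxE. Qed.

Lemma denomE (R : realType) (n k : nat) (lam2 : R)
    (A1 A2 : 'M[R]_k) (B1 B2 : 'M[R]_(n, k)) (WP WQ : 'M[R]_n) (V : 'M[R]_(n, k)) i j :
  denom lam2 A1 A2 B1 B2 WP WQ V i j =
  mneg B1 i j + mneg B2 i j + (V *m (mpos A1 + mpos A2)) i j
  + lam2 * ((degmx WP + degmx WQ) *m V) i j.
Proof. by rewrite /denom !addE scaleE. Qed.

Lemma numerE (R : realType) (n k : nat) (lam2 : R)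
    (A1 A2 : 'M[R]_k) (B1 B2 : 'M[R]_(n, k)) (WP WQ : 'M[R]_n) (V : 'M[R]_(n, k)) i j :
  numer lam2 A1 A2 B1 B2 WP WQ V i j =
  mpos B1 i j + mpos B2 i j + (V *m (mneg A1 + mneg A2)) i j
  + lam2 * ((WP + WQ) *m V) i j.
Proof. by rewrite /numer !addE scaleE. Qed.

Lemma cvg_denom (R : realType) (n k : nat) (lam2 : R)
    (A1 A2 : 'M[R]_k) (B1 B2 : 'M[R]_(n, k)) (WP WQ : 'M[R]_n)
    (Vt : nat -> 'M[R]_(n, k)) (V : 'M[R]_(n, k)) i j :
  (forall i j, Vt t i j @[t --> \oo] --> V i j) ->
  denom lam2 A1 A2 B1 B2 WP WQ (Vt t) i j @[t --> \oo] -->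
  denom lam2 A1 A2 B1 B2 WP WQ V i j.
Proof.
move=> H.
have -> : (fun t => denom lam2 A1 A2 B1 B2 WP WQ (Vt t) i j) =
  (fun t => mneg B1 i j + mneg B2 i j + (Vt t *m (mpos A1 + mpos A2)) i j
  + lam2 * ((degmx WP + degmx WQ) *m Vt t) i j).
  by apply: funext => t; rewrite denomE.
rewrite denomE; apply: cvgD; [apply: cvgD; [exact: cvg_cst|]|apply: cvgMl_tmp].
  exact: cvg_mulmxr.
exact: cvg_mulmxl.
Qed.

Lemma cvg_numer (R : realType) (n k : nat) (lam2 : R)
    (A1 A2 : 'M[R]_k) (B1 B2 : 'M[R]_(n, k)) (WP WQ : 'M[R]_n)
    (Vt : nat -> 'M[R]_(n, k)) (V : 'M[R]_(n, k)) i j :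
  (forall i j, Vt t i j @[t --> \oo] --> V i j) ->
  numer lam2 A1 A2 B1 B2 WP WQ (Vt t) i j @[t --> \oo] -->
  numer lam2 A1 A2 B1 B2 WP WQ V i j.
Proof.
move=> H.
have -> : (fun t => numer lam2 A1 A2 B1 B2 WP WQ (Vt t) i j) =
  (fun t => mpos B1 i j + mpos B2 i j + (Vt t *m (mneg A1 + mneg A2)) i j
  + lam2 * ((WP + WQ) *m Vt t) i j).
  by apply: funext => t; rewrite numerE.
rewrite numerE; apply: cvgD; [apply: cvgD; [exact: cvg_cst|]|apply: cvgMl_tmp].
  exact: cvg_mulmxr.
exact: cvg_mulmxl.
Qed.

Lemma kkt_id (R : realType) (n k : nat) (lam2 : R)
    (A1 A2 : 'M[R]_k) (B1 B2 : 'M[R]_(n, k)) (WP WQ : 'M[R]_n) (V : 'M[R]_(n, k)) :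
  kktgrad lam2 A1 A2 B1 B2 WP WQ V =
  2%:R *: (denom lam2 A1 A2 B1 B2 WP WQ V - numer lam2 A1 A2 B1 B2 WP WQ V).
Proof.
have dec : forall m p (M : 'M[R]_(m, p)), M = mpos M - mneg M.
  move=> m p M; apply/matrixP => i j; rewrite !mxE; field; done.
rewrite /kktgrad /denom /numer /laplacian /degmx.
rewrite {1}(dec _ _ B1) {1}(dec _ _ B2) {1}(dec _ _ A1) {1}(dec _ _ A2).
rewrite !mulmxDr ?mulmxN !mulmxDl ?mulNmx.
move: (V *m mpos A1) (V *m mneg A1) (V *m mpos A2) (V *m mneg A2).
move: (diag_mx _ *m V) (WP *m V) (diag_mx _ *m V) (WQ *m V).
move: (mpos B1) (mneg B1) (mpos B2) (mneg B2) => a b c d e f g h p q r s.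
apply/matrixP => i j; rewrite !mxE /=; ring.
Qed.
Theorem theorem1 (R : realType) (n k : nat) (lam2 : R)
    (A1 A2 : 'M[R]_k) (B1 B2 : 'M[R]_(n, k)) (WP WQ : 'M[R]_n)
    (Vt : nat -> 'M[R]_(n, k)) :
  (0 < n)%N -> (0 < k)%N -> 0 <= lam2 ->
  A1^T = A1 -> A2^T = A2 -> WP^T = WP -> WQ^T = WQ ->
  (forall i j, 0 <= WP i j) -> (forall i j, 0 <= WQ i j) ->
  (forall i j, 0 < Vt 0%N i j) ->
  (forall t, Vt t.+1 = Tupd lam2 A1 A2 B1 B2 WP WQ (Vt t)) ->
  (forall t i j, 0 < numer lam2 A1 A2 B1 B2 WP WQ (Vt t) i j) ->
  (forall t i j, 0 < denom lam2 A1 A2 B1 B2 WP WQ (Vt t) i j) ->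
  (forall t, Fobj lam2 A1 A2 B1 B2 WP WQ (Vt t.+1)
             <= Fobj lam2 A1 A2 B1 B2 WP WQ (Vt t))
  /\
  (forall Vstar : 'M[R]_(n, k),
     (forall i j, (fun t => Vt t i j) @ \oo --> Vstar i j) ->
     (forall i j, 0 < denom lam2 A1 A2 B1 B2 WP WQ Vstar i j) ->
     forall i j, kktgrad lam2 A1 A2 B1 B2 WP WQ Vstar i j * Vstar i j = 0).
Proof.
move=> _ _ l0 hA1 hA2 hWP hWQ WP0 WQ0 V00 HT nu0 de0.
have Vpos : forall t i j, 0 < Vt t i j.
  elim=> [|t IH] i j; first exact: V00.
  rewrite HT mxE; apply: mulr_gt0; first exact: IH.
  by rewrite sqrtr_gt0 divr_gt0.
split.
  move=> t; rewrite HT; apply: step => //; (exact: Vpos) || (exact: nu0) || (exact: de0).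
move=> Vs hc _ i j.
set nu := fun t => numer lam2 A1 A2 B1 B2 WP WQ (Vt t) i j.
set de := fun t => denom lam2 A1 A2 B1 B2 WP WQ (Vt t) i j.
have E : (fun t => Vt t.+1 i j ^+ 2 * de t) = (fun t => Vt t i j ^+ 2 * nu t).
  apply: funext => t; rewrite HT mxE exprMn sqr_sqrtr; last first.
    by apply: ltW; rewrite divr_gt0.
  rewrite /nu /de; have := de0 t i j; move: (denom _ _ _ _ _ _ _ _ _ _) => b b0.
  field; by rewrite gt_eqF.
have c1 : (Vt t.+1 i j ^+ 2 * de t) @[t --> \oo] -->
          Vs i j ^+ 2 * denom lam2 A1 A2 B1 B2 WP WQ Vs i j.
  apply: cvgM; last exact: cvg_denom.
  rewrite expr2; apply: cvgM.
    by have := hc i j; rewrite -(cvg_shiftS (fun t => Vt t i j)).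
  by have := hc i j; rewrite -(cvg_shiftS (fun t => Vt t i j)).
have c2 : (Vt t i j ^+ 2 * nu t) @[t --> \oo] -->
          Vs i j ^+ 2 * numer lam2 A1 A2 B1 B2 WP WQ Vs i j.
  apply: cvgM; last exact: cvg_numer.
  rewrite expr2; apply: cvgM; exact: hc.
rewrite E in c1.
have eq := cvg_unique (@Rhausdorff R) c1 c2.
rewrite kkt_id scaleE subE.
move: eq; set d := denom _ _ _ _ _ _ _ _ _ _; set u := numer _ _ _ _ _ _ _ _ _ _.
move=> eq.
have /eqP : Vs i j ^+ 2 * (d - u) = 0 by rewrite mulrBr eq subrr.
rewrite mulf_eq0 => /orP [| /eqP ->]; last by rewrite !mulr0 mul0r.
by rewrite sqrf_eq0 => /eqP ->; rewrite mulr0.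
Qed.
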